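(* Let $w$ be a word of length $n \geq 9$ over some alphabet such that $w$ contains no $3$-antipower as a factor and $w$ contains exactly three distinct letters. Then, up to a bijective renaming of the letters (to $0,1,2$), the following hold: (a) if $n \equiv 0 \pmod 3$, there is no such $w$; (b) if $n \equiv 1 \pmod 3$, then $w = 01^{n-2}2$; (c) if $n \equiv 2 \pmod 3$, then $w$ is one of $001^{n-3}2$, $010^{n-3}2$, $01^{n-2}2$, $01^{n-3}21$, or $01^{n-3}22$.
   Context: A $3$-antipower is a word $u_1u_2u_3$ with $|u_1|=|u_2|=|u_3|$ and $u_1,u_2,u_3$ pairwise distinct; a factor is a contiguous subword. $a^m$ denotes $m$ consecutive copies of the letter $a$. *)

(* Defs.v *)
From mathcomp Require Import all_boot.
Set Implicit Arguments. Unset Strict Implicit. Unset Printing Implicit Defensive.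

Definition antipower3 (T : eqType) (u : seq T) : Prop :=
  exists u1 u2 u3 : seq T,
    [/\ u = u1 ++ u2 ++ u3, size u1 = size u2, size u2 = size u3
      & [/\ u1 != u2, u1 != u3 & u2 != u3]].

Definition has_antipower3_factor (T : eqType) (w : seq T) : Prop :=
  exists u : seq T, infix u w /\ antipower3 u.

(* Main.v *)
Require Import Defs.
From mathcomp Require Import all_boot.
From mathcomp Require Import zify.
Set Implicit Arguments. Unset Strict Implicit. Unset Printing Implicit Defensive.

Lemma infix_win (T : eqType) (w : seq T) s k : infix (take k (drop s w)) w.
Proof. exact: infix_trans (infix_take _ _) (infix_drop _ _). Qed.

Lemma blocks_ap (T : eqType) (u : seq T) s K :
  0 < K -> s + 3 * K <= size u ->
  take K (drop s u) != take K (drop (s + K) u) ->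
  take K (drop s u) != take K (drop (s + 2 * K) u) ->
  take K (drop (s + K) u) != take K (drop (s + 2 * K) u) ->
  has_antipower3_factor u.
Proof.
move=> K0 Hs H12 H13 H23.
exists (take (3 * K) (drop s u)); split; first exact: infix_win.
exists (take K (drop s u)), (take K (drop (s + K) u)), (take K (drop (s + 2 * K) u)).
have -> : 3 * K = K + (K + K) by lia.
rewrite takeD drop_drop takeD drop_drop.
have -> : K + s = s + K by lia.
have -> : K + (s + K) = s + 2 * K by lia.
rewrite !size_takel ?size_drop; try lia.
by split.
Qed.

Definition blk (T : eqType) (u : seq T) s K := take K (drop s u).

Definition hasap (T : eqType) (u : seq T) : bool :=
  has (fun s => has (fun K =>
    [&& 0 < K, s + 3 * K <= size u,
        blk u s K != blk u (s + K) K,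
        blk u s K != blk u (s + 2 * K) K &
        blk u (s + K) K != blk u (s + 2 * K) K]) (iota 1 (size u %/ 3)))
   (iota 0 (size u)).

Lemma hasap_map (T : eqType) (f : T -> nat) (u : seq T) :
  hasap (map f u) -> has_antipower3_factor u.
Proof.
move/hasP=> [s _ /hasP [K _]]; rewrite /blk size_map -!map_drop -!map_take.
case/and5P=> K0 Hs H1 H2 H3.
apply: (blocks_ap K0 Hs).
- by apply: contra H1 => /eqP ->.
- by apply: contra H2 => /eqP ->.
- by apply: contra H3 => /eqP ->.
Qed.

Definition P9 (s : seq nat) : bool :=
  ~~ [&& 0 \in s, 1 \in s & 2 \in s] || hasap s.

Fixpoint allw (k : nat) (s : seq nat) : bool :=
  if k is k'.+1 then all (fun x => allw k' (x :: s)) [:: 0; 1; 2] else P9 s.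

Lemma allwP k s : allw k s -> forall u, size u = k -> all (fun x => x < 3) u ->
  P9 (rev u ++ s).
Proof.
elim: k s => [|k IH] s /=.
  by move=> H [|//] _ _.
move=> H [//|y u] [Hu] /andP [Hy Hall].
have Hy' : allw k (y :: s).
  move: H Hy; rewrite andbT; case/and3P=> H0 H1 H2.
  by case: y => [|[|[|y]]].
have := IH _ Hy' u Hu Hall.
by rewrite rev_cons -cats1 -catA.
Qed.

Lemma check9 : allw 9 [::].
Proof. vm_compute. reflexivity. Qed.

Lemma nine_nat (u : seq nat) : size u = 9 -> all (fun x => x < 3) u ->
  0 \in u -> 1 \in u -> 2 \in u -> hasap u.
Proof.
move=> Hs Ha H0 H1 H2.
have := allwP check9 (u := rev u); rewrite size_rev all_rev revK cats0 => /(_ Hs Ha).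
by rewrite /P9 H0 H1 H2.
Qed.

Section S.
Variable T : eqType.
Variable x0 : T.
Implicit Types w : seq T.

Lemma ap_infix (v w : seq T) : infix v w -> has_antipower3_factor v -> has_antipower3_factor w.
Proof. move=> Hvw [u [Huv Hu]]; exists u; split => //; exact: infix_trans Huv Hvw. Qed.

Lemma win_ap w s K i j l : 0 < K -> s + 3 * K <= size w -> i < K -> j < K -> l < K ->
  nth x0 w (s + i) != nth x0 w (s + K + i) ->
  nth x0 w (s + j) != nth x0 w (s + 2 * K + j) ->
  nth x0 w (s + K + l) != nth x0 w (s + 2 * K + l) ->
  has_antipower3_factor w.
Proof.
move=> K0 Hs Hi Hj Hl H1 H2 H3; apply: (blocks_ap K0 Hs).
- apply: contra H1 => /eqP E; have := congr1 (fun t => nth x0 t i) E.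
  by rewrite !nth_take // !nth_drop => ->.
- apply: contra H2 => /eqP E; have := congr1 (fun t => nth x0 t j) E.
  by rewrite !nth_take // !nth_drop => ->.
- apply: contra H3 => /eqP E; have := congr1 (fun t => nth x0 t l) E.
  by rewrite !nth_take // !nth_drop => ->.
Qed.

Definition f3 (a b : T) (t : T) : nat := if t == a then 0 else if t == b then 1 else 2.

Lemma nine w s i j k : s + 9 <= size w -> s <= i < s + 9 -> s <= j < s + 9 -> s <= k < s + 9 ->
  nth x0 w i != nth x0 w j -> nth x0 w i != nth x0 w k -> nth x0 w j != nth x0 w k ->
  has_antipower3_factor w.
Proof.
move=> Hs Hi Hj Hk Hij Hik Hjk.
set v := take 9 (drop s w).
have Hv : size v = 9 by rewrite size_takel // size_drop; lia.
have Hnv t : t < 9 -> nth x0 v t = nth x0 w (s + t) by move=> ?; rewrite nth_take // nth_drop.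
set f := f3 (nth x0 w i) (nth x0 w j).
apply: (ap_infix (infix_win w s 9)); apply: (@hasap_map _ f).
have Hm t : t < 9 -> f (nth x0 w (s + t)) \in map f v.
  by move=> Ht; rewrite -Hnv //; apply: map_f; apply: mem_nth; rewrite Hv.
apply: nine_nat.
- by rewrite size_map.
- by apply/allP => y /mapP [z _ ->]; rewrite /f /f3; case: ifP => //; case: ifP.
- have := Hm (i - s); rewrite (_ : s + (i - s) = i); last lia.
  by rewrite /f /f3 eqxx; apply; lia.
- have := Hm (j - s); rewrite (_ : s + (j - s) = j); last lia.
  by rewrite /f /f3 eqxx eq_sym (negbTE Hij); apply; lia.
- have := Hm (k - s); rewrite (_ : s + (k - s) = k); last lia.
  by rewrite /f /f3 eq_sym (negbTE Hik) eq_sym (negbTE Hjk); apply; lia.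
Qed.

Definition abc w p m a b c :=
  [/\ [/\ a != b, a != c & b != c], (0 < m) /\ (p + m + 1 < size w),
      nth x0 w p = a,
      (forall i, p < i <= p + m -> nth x0 w i = b) & nth x0 w (p + m + 1) = c].

Lemma abc_ap w p m a b c K s : abc w p m a b c ->
  0 < K -> s <= p < s + K -> s + 2 * K <= p + m + 1 -> p + m + 1 < s + 3 * K ->
  s + 3 * K <= size w -> 2 * K <= m + 1 -> has_antipower3_factor w.
Proof.
move=> [[Hab Hac Hbc] [Hm Hq] Ha Hb Hc] K0 Hsp H2 H3 Hn HK.
apply: (@win_ap w s K (p - s) (p - s) (p + m + 1 - s - 2 * K)) => //; try lia.
- rewrite (_ : s + (p - s) = p); last lia.
  rewrite (_ : s + K + (p - s) = p + K); last lia.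
  by rewrite Ha Hb //; lia.
- rewrite (_ : s + (p - s) = p); last lia.
  rewrite (_ : s + 2 * K + (p - s) = p + 2 * K); last lia.
  rewrite Ha; have [E|E] := eqVneq (2 * K) (m + 1).
    by rewrite E addnA Hc.
  by rewrite Hb //; lia.
- rewrite (_ : s + K + (p + m + 1 - s - 2 * K) = p + m + 1 - K); last lia.
  rewrite (_ : s + 2 * K + (p + m + 1 - s - 2 * K) = p + m + 1); last lia.
  by rewrite Hc Hb //; lia.
Qed.

Lemma size_undup_le1 (w : seq T) y : all (pred1 y) w -> size (undup w) <= 1.
Proof.
move=> H; have -> : 1 = size [:: y] by [].
apply: uniq_leq_size; first exact: undup_uniq.
move=> z; rewrite mem_undup => Hz; move/allP: H => /(_ z Hz) /= /eqP ->.
by rewrite inE.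
Qed.

Lemma struct w : 3 <= size (undup w) -> exists p m a b c, abc w p m a b c.
Proof.
elim: w => [//|x w IH] /=.
case: (leqP 3 (size (undup w))) => H3 H.
  have [p [m [a [b [c [Hd [Hm Hq] Ha Hb Hc]]]]]] := IH H3.
  exists p.+1, m, a, b, c; split.
  - done.
  - split => //=; lia.
  - done.
  - by move=> [|i] Hi //=; apply: Hb; lia.
  - by rewrite -Hc.
case: ifP H => Hx /= H; first lia.
case: w IH H3 H Hx => [//|y w'] _ H3 H Hx.
set w := y :: w'.
have Hhas : has (fun z => z != y) w.
  apply/negPn/negP => /hasPn Hall.
  have : size (undup w) <= 1.
    by apply: (size_undup_le1 (y := y)); apply/allP => z /Hall /negPn.
  by rewrite /w; lia.
set k := find (fun z => z != y) w.
have Hk : k < size w by rewrite -has_find.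
have Hz := nth_find x0 Hhas.
have Hbef i : i < k -> nth x0 w i = y.
  by move=> Hi; have := before_find x0 Hi => /negPn /eqP.
have Hk0 : 0 < k by rewrite /k /w /= eqxx.
have Hy : y \in w by rewrite inE eqxx.
have Hzw : nth x0 w k \in w by apply: mem_nth.
exists 0, k, x, y, (nth x0 w k); split => //=.
- split.
  + by apply: contraFN Hx => /eqP ->.
  + by apply: contraFN Hx => /eqP ->.
  + by rewrite eq_sym.
- split; [lia | idtac]. rewrite /w /=; rewrite /w /= in Hk; lia.
- by move=> [|i] Hi //; apply: Hbef; lia.
- by rewrite add0n addn1.
Qed.

End S.

Section S2.
Variable T : eqType.
Variable x0 : T.

Lemma decomp (w : seq T) p m a b c : abc x0 w p m a b c ->
  w = take p w ++ a :: nseq m b ++ c :: drop (p + m + 2) w.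
Proof.
case=> _ [Hm Hq] Ha Hb Hc; apply: (@eq_from_nth _ x0).
  rewrite size_cat /= size_cat size_nseq /= size_takel ?size_drop; lia.
move=> i Hi; rewrite nth_cat size_takel; last lia.
case: ltnP => H1; first by rewrite nth_take.
case E: (i - p) => [|j] /=.
  by have -> : i = p by lia.
rewrite nth_cat size_nseq; case: ltnP => H2.
  rewrite nth_nseq H2; apply: Hb; lia.
case E2: (j - m) => [|k] /=.
  by have -> : i = p + m + 1 by lia.
rewrite nth_drop; congr nth; lia.
Qed.

Lemma seq1 (s : seq T) : size s = 1 -> s = [:: nth x0 s 0].
Proof. by case: s => [|y [|]]. Qed.

Lemma f3a (a b : T) : f3 a b a = 0.
Proof. by rewrite /f3 eqxx. Qed.
Lemma f3b (a b : T) : a != b -> f3 a b b = 1.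
Proof. by rewrite /f3 eq_sym => /negbTE ->; rewrite eqxx. Qed.
Lemma f3c (a b c : T) : a != c -> b != c -> f3 a b c = 2.
Proof. by rewrite /f3 eq_sym => /negbTE -> ; rewrite eq_sym => /negbTE ->. Qed.

Lemma f3_inj (a b c : T) : a != b -> a != c -> b != c ->
  {in [:: a; b; c] &, injective (f3 a b)}.
Proof.
move=> Hab Hac Hbc x y; rewrite !inE.
by case/or3P=> /eqP -> /or3P [] /eqP ->;
  rewrite ?f3a ?(f3b Hab) ?(f3c Hac Hbc).
Qed.

Lemma in3 (w : seq T) a b c : size (undup w) = 3 -> a != b -> a != c -> b != c ->
  a \in w -> b \in w -> c \in w -> {subset w <= [:: a; b; c]}.
Proof.
move=> Hu Hab Hac Hbc Ha Hb Hc x Hx; apply/negPn/negP => Hn.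
have : size [:: x; a; b; c] <= size (undup w).
  apply: uniq_leq_size.
    by rewrite /= Hn !inE negb_or Hab Hac Hbc.
  by move=> y; rewrite !inE mem_undup => /or4P [] /eqP ->.
by rewrite Hu.
Qed.

End S2.

Theorem theorem9 (T : eqType) (w : seq T) :
  9 <= size w ->
  ~ has_antipower3_factor w ->
  size (undup w) = 3 ->
  [/\ size w %% 3 = 0 -> False,
      size w %% 3 = 1 ->
        exists f : T -> nat, {in w &, injective f} /\
          map f w = [:: 0] ++ nseq (size w - 2) 1 ++ [:: 2]
    & size w %% 3 = 2 ->
        exists f : T -> nat, {in w &, injective f} /\
          (map f w = [:: 0; 0] ++ nseq (size w - 3) 1 ++ [:: 2] \/
           map f w = [:: 0; 1] ++ nseq (size w - 3) 0 ++ [:: 2] \/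
           map f w = [:: 0] ++ nseq (size w - 2) 1 ++ [:: 2] \/
           map f w = [:: 0] ++ nseq (size w - 3) 1 ++ [:: 2; 1] \/
           map f w = [:: 0] ++ nseq (size w - 3) 1 ++ [:: 2; 2])].
Proof.
move=> Hn Hap Hu.
have [x0 _] : exists x0 : T, True by case: w Hn {Hap Hu} => [|x ?] //; exists x.
have [p [m [a [b [c Habc]]]]] := struct x0 (w := w) (eq_leq (esym Hu)).
have Habc' := Habc; case: Habc' => [[Hab Hac Hbc] [Hm Hq] Ha Hb Hc].
have Hdec := decomp Habc.
have Haw : a \in w by rewrite -Ha; apply: mem_nth; lia.
have Hbw : b \in w by rewrite -(Hb (p + 1)); [apply: mem_nth | ]; lia.
have Hcw : c \in w by rewrite -Hc; apply: mem_nth; lia.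
have Hsub := in3 Hu Hab Hac Hbc Haw Hbw Hcw.
have Hinj : {in w &, injective (f3 a b)}.
  by move=> x y /Hsub Hx /Hsub Hy; apply: (f3_inj Hab Hac Hbc).
have Hsub' : {subset w <= [:: b; a; c]}.
  by move=> x /Hsub; rewrite !inE => /or3P [] ->; rewrite ?orbT.
have Hinj' : {in w &, injective (f3 b a)}.
  move=> x y /Hsub' Hx /Hsub' Hy; apply: (f3_inj _ Hbc Hac) => //.
  by rewrite eq_sym.
remember (size w) as n eqn:En.
have m8 : 8 <= m.
  rewrite leqNgt; apply/negP => Hm8; apply: Hap.
  apply: (@nine _ x0 w (minn p (n - 9)) p (p + 1) (p + m + 1)); [lia | lia | lia | lia | | | ].
  by rewrite Ha Hb ?Hc //; lia.
  by rewrite Ha Hc.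
  by rewrite Hb ?Hc //; lia.
have D2 : p + m + 4 <= n -> False.
  move=> HD; apply: Hap; apply: (abc_ap (K := (m + 4) %/ 3) (s := p) Habc); lia.
have P2 : 2 <= p -> False.
  move=> HP; apply: Hap.
  apply: (abc_ap (K := (m + 4) %/ 3) (s := p + m + 2 - 3 * ((m + 4) %/ 3)) Habc); lia.
have P1D1 : p = 1 -> n = p + m + 3 -> False.
  move=> HP HD; apply: Hap.
  apply: (abc_ap (K := (m + 4) %/ 3) (s := minn 1 (m + 4 - 3 * ((m + 4) %/ 3))) Habc); lia.
have [Hp0|Hp1] : p = 0 \/ p = 1 by lia.
- have [HD0|HD1] : n = m + 2 \/ n = m + 3 by lia.
  +
    have Hw : w = a :: nseq m b ++ [:: c].
      rewrite [LHS]Hdec Hp0 take0 drop_oversize //; lia.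
    split.
    * move=> H0; apply: Hap; apply: (abc_ap (K := n %/ 3) (s := 0) Habc); lia.
    * move=> _; exists (f3 a b); split => //.
      rewrite Hw /= map_cat map_nseq /= f3a (f3b Hab) (f3c Hac Hbc).
      by have -> : n - 2 = m by lia.
    * move=> _; exists (f3 a b); split => //; right; right; left.
      rewrite Hw /= map_cat map_nseq /= f3a (f3b Hab) (f3c Hac Hbc).
      by have -> : n - 2 = m by lia.
  + set d := nth x0 w (m + 2).
    have Hw : w = a :: nseq m b ++ [:: c; d].
      rewrite [LHS]Hdec Hp0 take0 add0n (seq1 x0 (s := drop (m + 2) w)).
        by rewrite nth_drop addn0.
      rewrite size_drop; lia.
    split.
    * move=> H0; apply: Hap; apply: (abc_ap (K := n %/ 3) (s := 0) Habc); lia.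
    * move=> H1; exfalso; apply: Hap; apply: (abc_ap (K := n %/ 3) (s := 0) Habc); lia.
    * move=> H2.
      have Hdw : d \in w by apply: mem_nth; lia.
      move: (Hsub _ Hdw); rewrite !inE => /or3P [] /eqP Hd.
      - have Hbm : nth x0 w m = b by apply: Hb; lia.
        have Hcm : nth x0 w (m + 1) = c by rewrite -Hc Hp0.
        exfalso; apply: Hap.
        apply: (@nine _ x0 w (n - 9) (m) (m + 1) (m + 2)); [lia | lia | lia | lia | | | ].
        + by rewrite Hbm Hcm.
        + by rewrite Hbm -/d Hd eq_sym.
        + by rewrite Hcm -/d Hd eq_sym.
      - exists (f3 a b); split => //; right; right; right; left.
        rewrite Hw /= map_cat map_nseq /= Hd f3a (f3b Hab) (f3c Hac Hbc).
        by have -> : n - 3 = m by lia.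
      - exists (f3 a b); split => //; right; right; right; right.
        rewrite Hw /= map_cat map_nseq /= Hd f3a (f3b Hab) (f3c Hac Hbc).
        by have -> : n - 3 = m by lia.
- have HD0 : n = m + 3.
    have : n <> p + m + 3 by move=> /(P1D1 Hp1).
    lia.
  set e := nth x0 w 0.
  have Hw : w = e :: a :: nseq m b ++ [:: c].
    rewrite [LHS]Hdec Hp1 drop_oversize; last lia.
    rewrite (seq1 x0 (s := take 1 w)); first by rewrite nth_take.
    rewrite size_takel; lia.
  split.
  * move=> H0; apply: Hap; apply: (abc_ap (K := n %/ 3) (s := 0) Habc); lia.
  * move=> H1; exfalso; apply: Hap; apply: (abc_ap (K := n %/ 3) (s := 1) Habc); lia.
  * move=> H2.
    have Hew : e \in w by apply: mem_nth; lia.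
    move: (Hsub _ Hew); rewrite !inE => /or3P [] /eqP He.
    - exists (f3 a b); split => //; left.
      rewrite Hw /= map_cat map_nseq /= He f3a (f3b Hab) (f3c Hac Hbc).
      by have -> : n - 3 = m by lia.
    - exists (f3 b a); split => //; right; left.
      have Hba : b != a by rewrite eq_sym.
      rewrite Hw /= map_cat map_nseq /= He f3a (f3b Hba) (f3c Hbc Hac).
      by have -> : n - 3 = m by lia.
    - exfalso; apply: Hap.
      apply: (@nine _ x0 w (0) (0) (1) (2)); [lia | lia | lia | lia | | | ].
      + by rewrite -/e He -Hp1 Ha eq_sym.
      + rewrite -/e He Hb; [by rewrite eq_sym | lia].
      + by rewrite -Hp1 Ha Hb //; lia.
Qed.
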